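(* Let $p_j>0$, $q_{j+1}>0$, $r_j\ge 0$ ($j\ge 0$) be the one-step transition probabilities of a random walk on $\mathcal{N}=\{0,1,2,\dots\}$ (up-step $p_j$, holding $r_j$, down-step $q_j$ from state $j$), with $q_0:=0$ and $p_j+q_j+r_j=1$ for all $j\ge0$. Let $\pi_0:=1$, $\pi_n:=\frac{p_0\cdots p_{n-1}}{q_1\cdots q_n}$ ($n\ge1$), and define polynomials $Q_n$ by $Q_0(x)=1$, $p_0Q_1(x)=x-r_0$, and $xQ_n(x)=q_nQ_{n-1}(x)+r_nQ_n(x)+p_nQ_{n+1}(x)$ for $n\ge 1$. Let $\psi$ be the unique Borel probability measure on $[-1,1]$ with infinite support with respect to which the $Q_n$ are orthogonal, and $\eta:=\sup\operatorname{supp}(\psi)$. For $\theta\ge\eta$ and $j\ge 0$ define \[p_j(\theta):=\frac{Q_{j+1}(\theta)}{Q_j(\theta)}\frac{p_j}{\theta},\quad r_j(\theta):=\frac{r_j}{\theta},\quad \pi_j(\theta):=\pi_jQ_j^2(\theta),\] and for $n\ge0$ \[M_n(\theta):=\sum_{j=0}^n\frac{1}{p_j(\theta)\pi_j(\theta)}\sum_{k=0}^j r_k(\theta)\pi_k(\theta).\] If $\eta\le\theta_1\le\theta_2$, then $M_n(\theta_1)\ge M_n(\theta_2)$ for all $n\ge 0$.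
   Context: It is known that $\eta>0$ and that $Q_n(x)>0$ for all $n\ge0$ whenever $x\ge\eta$, so the quantities above are well defined and positive. *)

(* Defs.v *)
From HB Require Import structures.
From mathcomp Require Import all_boot all_order all_algebra.
From mathcomp Require Import all_classical all_reals all_analysis.
Set Implicit Arguments. Unset Strict Implicit. Unset Printing Implicit Defensive.
Import Order.TTheory GRing.Theory Num.Theory.
Import numFieldNormedType.Exports.
Local Open Scope classical_set_scope.
Local Open Scope ring_scope.

Section Defs.
Variable R : realType.

Fixpoint Qpair (p q r : nat -> R) (x : R) (n : nat) : R * R :=
  match n with
  | 0%N => (1, (x - r 0%N) / p 0%N)
  | m.+1 => let: (a, b) := Qpair p q r x m in
            (b, ((x - r m.+1) * b - q m.+1 * a) / p m.+1)
  end.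

Definition Qpoly (p q r : nat -> R) (n : nat) (x : R) : R := (Qpair p q r x n).1.

Definition piw (p q : nat -> R) (n : nat) : R :=
  (\prod_(i < n) p i) / (\prod_(i < n) q i.+1).

Definition p_th (p q r : nat -> R) (θ : R) (j : nat) : R :=
  Qpoly p q r j.+1 θ / Qpoly p q r j θ * (p j / θ).
Definition r_th (r : nat -> R) (θ : R) (j : nat) : R := r j / θ.
Definition pi_th (p q r : nat -> R) (θ : R) (j : nat) : R :=
  piw p q j * (Qpoly p q r j θ) ^+ 2.

Definition M_th (p q r : nat -> R) (n : nat) (θ : R) : R :=
  \sum_(j < n.+1) (p_th p q r θ j * pi_th p q r θ j)^-1 *
     \sum_(k < j.+1) r_th r θ k * pi_th p q r θ k.

Definition msupp (mu : set R -> \bar R) : set R :=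
  [set x : R | forall U : set R, open U -> U x -> (0 < mu U)%E].

End Defs.

(* Main.v *)
Require Import Defs.
From HB Require Import structures.
From mathcomp Require Import all_boot all_order all_algebra.
From mathcomp Require Import all_classical all_reals all_analysis measurable_realfun.
From mathcomp Require Import ring lra.
From mathcomp Require Import finmap.
Import Order.TTheory GRing.Theory Num.Theory.
Import numFieldNormedType.Exports.
Local Open Scope classical_set_scope.
Local Open Scope ring_scope.

Section Alg.
Variables (R : realType) (p q r : nat -> R).

Lemma Qpoly0 x : Qpoly p q r 0 x = 1.
Proof. by []. Qed.

Lemma QpolyS n x : Qpoly p q r n.+1 x = (Qpair p q r x n).2.
Proof. rewrite /Qpoly /=; by case: (Qpair p q r x n). Qed.

Lemma Qpoly1 x : Qpoly p q r 1 x = (x - r 0%N) / p 0%N.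
Proof. by []. Qed.

Lemma QpolySS n x : Qpoly p q r n.+2 x =
  ((x - r n.+1) * Qpoly p q r n.+1 x - q n.+1 * Qpoly p q r n x) / p n.+1.
Proof.
rewrite QpolyS QpolyS /Qpoly /=.
by case: (Qpair p q r x n) => a b /=.
Qed.

Fixpoint Qpp (n : nat) : {poly R} * {poly R} :=
  match n with
  | 0%N => (1, (p 0%N)^-1 *: ('X - (r 0%N)%:P))
  | m.+1 => let: (a, b) := Qpp m in
            (b, (p m.+1)^-1 *: (('X - (r m.+1)%:P) * b - q m.+1 *: a))
  end.

Definition Qp n := (Qpp n).1.

Lemma Qpp_horner n x : ((Qpp n).1).[x] = (Qpair p q r x n).1 /\
                       ((Qpp n).2).[x] = (Qpair p q r x n).2.
Proof.
elim: n => [|n [IH1 IH2]] /=.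
  by rewrite !hornerE /= mulrC.
move: IH1 IH2; case: (Qpp n) => a b; case: (Qpair p q r x n) => a0 b0 /= E1 E2.
rewrite /= E2; split=> //; rewrite !hornerE E1 E2 mulrC //.
Qed.

Lemma Qp_horner n x : (Qp n).[x] = Qpoly p q r n x.
Proof. exact: (Qpp_horner n x).1. Qed.

End Alg.
Arguments Qp {R} p q r n.
Arguments Qp_horner {R} p q r n x.
Arguments QpolySS {R} p q r n x.
Arguments Qpoly1 {R} p q r x.
Arguments Qpoly0 {R} p q r x.
Section Int.
Variables (R : realType) (psi : probability R R).
Hypothesis hsupp : psi (~` `[-1, 1]) = 0%E.

Lemma meas_horner (P : {poly R}) (A : set R) : measurable_fun A (horner P).
Proof.
apply/measurable_funTS; apply: continuous_measurable_fun.
exact/continuous_horner.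
Qed.

Lemma int_horner (P : {poly R}) : psi.-integrable setT (EFin \o horner P).
Proof.
have mA : measurable (`[-1, 1] : set R) by exact: measurable_itv.
have mN : measurable (~` (`[-1, 1] : set R)) by exact: measurableC.
apply/(negligible_integrable _ _ _ hsupp) => //.
  by apply/measurable_EFinP; exact: meas_horner.
rewrite setTD setCK; apply: measurable_bounded_integrable => //.
- by rewrite (le_lt_trans (probability_le1 psi mA)) ?ltry.
- exact: meas_horner.
have : bounded_set (horner P @` `[-1, 1]).
  apply: compact_bounded; apply: continuous_compact; last exact: segment_compact.
  by apply: continuous_subspaceT => x; exact: continuous_horner.
rewrite /=/bounded_near; apply: filterS => M HM x Ax.
by apply: HM; exists x.
Qed.


Definition Lp (P : {poly R}) := Rintegral psi setT (fun x => P.[x]).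

Lemma LpD P Q : Lp (P + Q) = Lp P + Lp Q.
Proof.
rewrite /Lp (@eq_Rintegral _ _ _ _ _ (fun x => P.[x] + Q.[x])); last first.
  by move=> x _; rewrite hornerD.
by apply: RintegralD => //; exact: int_horner.
Qed.

Lemma LpZ c P : Lp (c *: P) = c * Lp P.
Proof.
rewrite /Lp (@eq_Rintegral _ _ _ _ _ (fun x => c * P.[x])); last first.
  by move=> x _; rewrite hornerZ.
by apply: RintegralZl => //; exact: int_horner.
Qed.

Lemma LpN P : Lp (- P) = - Lp P.
Proof. by rewrite -scaleN1r LpZ mulN1r. Qed.

Lemma LpB P Q : Lp (P - Q) = Lp P - Lp Q.
Proof. by rewrite LpD LpN. Qed.

Lemma Lp0 : Lp 0 = 0.
Proof. by rewrite -(scale0r 0) LpZ mul0r. Qed.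

Lemma Lp_sum n (F : nat -> {poly R}) :
  Lp (\sum_(k < n) F k) = \sum_(k < n) Lp (F k).
Proof.
elim: n => [|n IH]; first by rewrite !big_ord0 Lp0.
by rewrite !big_ord_recr /= LpD IH.
Qed.

Lemma Lp_ext P Q : (forall x, P.[x] = Q.[x]) -> Lp P = Lp Q.
Proof. by move=> h; rewrite /Lp; apply: eq_Rintegral => x _; exact: h. Qed.

Lemma Lp_ge0 P : (forall x, 0 <= P.[x]) -> 0 <= Lp P.
Proof. by move=> h; apply: Rintegral_ge0 => x _; exact: h. Qed.

End Int.
Arguments Lp {R} psi P.
Arguments int_horner {R psi}.
Arguments LpD {R psi}.
Arguments LpZ {R psi}.
Arguments LpN {R psi}.
Arguments LpB {R psi}.
Arguments Lp0 {R psi}.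
Arguments Lp_sum {R psi}.
Arguments Lp_ext {R psi}.
Arguments Lp_ge0 {R psi}.
Section Supp.
Variables (R : realType) (psi : probability R R).
Hypothesis hsupp : psi (~` `[-1, 1]) = 0%E.
Hypothesis hinf : infinite_set (msupp psi).

Let supp := msupp psi.
Let eta := sup supp.
Let C : set R := ~` `[-1, 1].

Lemma null_sub {A B : set R} : measurable A -> measurable B -> A `<=` B ->
  psi B = 0%E -> psi A = 0%E.
Proof.
move=> mA mB AB B0; apply/eqP; rewrite eq_le measure_ge0 andbT -B0.
exact: (le_measure _ (mem_set mA) (mem_set mB)).
Qed.

Lemma mgt (t : R) : measurable [set x : R | t < x].
Proof. apply: open_measurable; exact: open_gt. Qed.

Lemma supp_in x : supp x -> -1 <= x <= 1.
Proof.
move=> sx; apply/negPn/negP => hx.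
suff : (0 < psi C)%E by rewrite /C hsupp ltxx.
apply: sx.
  by apply: closed_openC; apply: interval_closed.
by rewrite /C /= in_itv /=; exact/negP.
Qed.

Lemma supp_ub : has_ubound supp.
Proof. by exists 1 => x /supp_in /andP[]. Qed.

Lemma supp_le_eta x : supp x -> x <= eta.
Proof. by move=> sx; apply: ub_le_sup => //; exact: supp_ub. Qed.

Lemma supp_n0 : supp !=set0.
Proof. exact: infinite_setN0. Qed.

Lemma eta_le1 : eta <= 1.
Proof. by apply: ge_sup; [exact: supp_n0| move=> x /supp_in /andP[]]. Qed.

Lemma gt1_null : psi [set x : R | 1 < x] = 0%E.
Proof.
apply: (null_sub (mgt 1) _ _ hsupp).
  by apply: measurableC; exact: measurable_itv.
move=> x /= h; rewrite in_itv /= => /andP[_].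
by rewrite leNgt h.
Qed.

Lemma gt_eta_null t : eta < t -> psi [set x : R | t < x] = 0%E.
Proof.
set S := [set t : R | eta <= t /\ psi [set x : R | t < x] = 0%E].
have S1 : S 1 by split; [exact: eta_le1|exact: gt1_null].
have lbS : lbound S eta by move=> y [].
have hinfS : has_inf S by split; [exists 1|exists eta].
set t0 := inf S.
have et0 : eta <= t0 by apply: lb_le_inf => //; exists 1.
have t0e : t0 <= eta.
  rewrite leNgt; apply/negP => et.
  have nst0 : ~ supp t0 by move/supp_le_eta; rewrite leNgt et.
  have [U [oU Ut0 nU]] : exists U : set R, [/\ open U, U t0 & ~ (0 < psi U)%E].
    apply: contrapT => hh; apply: nst0 => U oU Ut; apply: contrapT => nn.
    by apply: hh; exists U.
  have U0 : psi U = 0%E.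
    by apply/eqP; rewrite eq_le measure_ge0 andbT leNgt; exact/negP.
  have : nbhs t0 U by apply: oU.
  move=> /nbhs_ballP [d d0 dU].
  have [u Su ut] := inf_adherent d0 hinfS.
  pose t' := Num.max (t0 - d / 2) eta.
  have St' : S t'.
    split; first by rewrite le_max lexx orbT.
    have mU : measurable U by exact: open_measurable.
    apply: (null_sub (mgt t') (measurableU _ _ mU (mgt u))).
      move=> x /= hx.
      have [xu|ux] := ltP u x; first by right.
      have h : t0 - d / 2 < x by apply: le_lt_trans hx; rewrite le_max lexx.
      have d0' : 0 < d := d0.
      have ut' : u < t0 + d := ut.
      left; apply: dU; rewrite /ball /= ltr_norml; apply/andP; split; lra.
    apply/eqP; rewrite eq_le measure_ge0 andbT.
    apply: le_trans (measureU2 psi mU (mgt u)) _.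
    have [_ Su0] := Su.
    have -> : (psi U + psi [set x | (u < x)%R] = 0)%E by rewrite U0 Su0 adde0.
    by [].
  have : t0 <= t' by apply: ge_inf => //; exists eta.
  have d0' : 0 < d := d0.
  by rewrite /t' le_max => /orP[] h; lra.
move=> et.
have tt0 : 0 < t - t0 by rewrite subr_gt0; exact: le_lt_trans et.
have [u [_ Su] ut] := inf_adherent tt0 hinfS.
apply: (null_sub (mgt t) (mgt u) _ Su).
move=> x /= hx; have ut' : u < t0 + (t - t0) := ut; lra.
Qed.

Lemma eta_null : psi [set x : R | eta < x] = 0%E.
Proof.
have : psi.-negligible (\bigcup_k [set x : R | eta + (k.+1%:R)^-1 < x]).
  apply: negligible_bigcup => k; exists [set x : R | eta + (k.+1%:R)^-1 < x].
  split => //; first exact: mgt.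
  by apply: gt_eta_null; rewrite ltrDl invr_gt0 ltr0n.
move=> [N [mN N0 sN]].
apply: (null_sub (mgt eta) mN _ N0) => x /= ex.
apply: sN; exists (Num.truncn ((x - eta)^-1)) => //=.
have h1 := truncnS_gt ((x - eta)^-1).
have h2 : 0 < x - eta by rewrite subr_gt0.
by rewrite -ltrBrDl invf_plt ?posrE ?ltr0n.
Qed.


Lemma core (G : {poly R}) th : eta <= th ->
  (forall x, x <= th -> 0 <= G.[x]) ->
  forall s, supp s -> s < th -> 0 < G.[s] -> 0 < Lp psi G.
Proof.
move=> eth G0 s ss sth Gs.
pose c := G.[s] / 2.
have c0 : 0 < c by rewrite divr_gt0.
pose U := [set x : R | x < th] `&` (horner G @^-1` [set y : R | c < y]).
have oU : open U.
  apply: openI; first exact: open_lt.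
  apply: open_comp; last exact: open_gt.
  by move=> x _; exact: continuous_horner.
have Us : U s by split => //=; rewrite /c ltr_pdivrMr // ltr_pMr // ltr1n.
have psiU : (0 < psi U)%E by exact: ss.
have mU : measurable U by exact: open_measurable.
pose V := [set x : R | th < x].
have mV : measurable V by exact: mgt.
have V0 : psi V = 0%E.
  have [et|] := ltP eta th; first exact: gt_eta_null.
  move=> the; have E : th = eta by apply/eqP; rewrite eq_le the eth.
  rewrite /V E; exact: eta_null.
have iG : psi.-integrable setT (EFin \o horner G) := int_horner hsupp G.
have mCV : measurable (~` V) by exact: measurableC.
have e1 : Lp psi G = Rintegral psi (~` V) (horner G) + Rintegral psi V (horner G).
  rewrite /Lp -(setvU V); apply: Rintegral_setU => //.
    by rewrite setvU.
  by apply/disj_set2P; exact: setICl.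
have e2 : Rintegral psi V (horner G) = 0.
  rewrite /Rintegral null_set_integral //=.
  by apply/measurable_EFinP; exact: meas_horner.
have UV : U `<=` ~` V by move=> x [/= xt _]; rewrite /V /= ltNge; apply/negP; rewrite negbK ltW.
have mD : measurable (~` V `\` U) by exact: measurableD.
have e3 : Rintegral psi (~` V) (horner G) =
    Rintegral psi U (horner G) + Rintegral psi (~` V `\` U) (horner G).
  rewrite -{1}(setDUK UV); apply: Rintegral_setU => //.
    by rewrite setDUK //; apply: integrableS iG.
  by apply/disj_set2P; rewrite setDE setICA setICr setI0.
have e4 : 0 <= Rintegral psi (~` V `\` U) (horner G).
  apply: Rintegral_ge0 => x [/= + _]; rewrite /V /= => /negP; rewrite -leNgt.
  exact: G0.
have e5 : c * fine (psi U) <= Rintegral psi U (horner G).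
  rewrite -Rintegral_cst //; apply: le_Rintegral => //.
    exact: finite_measure_integrable_cst.
    by apply: integrableS iG.
  by move=> x [_ /= h]; exact: ltW.
have e6 : 0 < fine (psi U).
  apply: fine_gt0; rewrite psiU /=.
  by rewrite (le_lt_trans (probability_le1 psi mU)) ?ltry.
rewrite e1 e2 addr0 e3; apply: lt_le_trans (lerD e5 e4); rewrite addr0.
exact: mulr_gt0.
Qed.

End Supp.

Section Pos.
Variables (R : realType) (p q r : nat -> R).
Hypotheses (hp : forall j, 0 < p j) (hq : forall j, 0 < q j.+1) (hr : forall j, 0 <= r j).
Variable psi : probability R R.
Hypothesis hsupp : psi (~` `[-1, 1]) = 0%E.
Hypothesis hinf : infinite_set (msupp psi).
Hypothesis horth : forall m n : nat, m <> n ->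
     (\int[psi]_x (Qpoly p q r m x * Qpoly p q r n x)%:E = 0)%E.

Let Q := Qpoly p q r.
Let pw := piw p q.
Let eta := sup (msupp psi).

Lemma piw0 : pw 0%N = 1.
Proof. by rewrite /pw /piw !big_ord0 divr1. Qed.

Lemma piwS n : pw n.+1 = pw n * p n / q n.+1.
Proof.
rewrite /pw /piw !big_ord_recr /=.
have h1 : \prod_(i < n) q i.+1 != 0.
  by rewrite prodf_seq_neq0; apply/allP => i _; rewrite gt_eqF // hq.
have h2 : q n.+1 != 0 by rewrite gt_eqF // hq.
by field; rewrite h1 h2.
Qed.

Lemma piw_gt0 n : 0 < pw n.
Proof.
elim: n => [|n IH]; first by rewrite piw0.
by rewrite piwS divr_gt0 // mulr_gt0.
Qed.

Lemma CD m x th : (x - th) * \sum_(k < m.+1) pw k * Q k th * Q k x =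
  p m * pw m * (Q m.+1 x * Q m th - Q m x * Q m.+1 th).
Proof.
have pn0 : forall j, p j != 0 by move=> j; rewrite gt_eqF.
have qn0 : forall j, q j.+1 != 0 by move=> j; rewrite gt_eqF.
elim: m => [|m IH].
  rewrite big_ord1 /Q !Qpoly1 !Qpoly0 piw0.
  by field.
rewrite big_ord_recr /= mulrDr IH /Q !QpolySS piwS -/(Q _ _).
rewrite /Q. set a := Qpoly p q r m x; set b := Qpoly p q r m th.
set c := Qpoly p q r m.+1 x; set d := Qpoly p q r m.+1 th.
by field; rewrite pn0 qn0.
Qed.

Lemma orthL i j : i <> j -> Lp psi (Qp p q r i * Qp p q r j) = 0.
Proof.
move=> ij; rewrite /Lp /Rintegral.
rewrite (eq_integral (fun x => (Qpoly p q r i x * Qpoly p q r j x)%:E)).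
  by rewrite horth.
by move=> x _; rewrite hornerM !Qp_horner.
Qed.

Lemma step m th : eta <= th -> (forall k, (k <= m)%N -> 0 < Q k th) ->
  0 < Q m.+1 th.
Proof.
move=> eth IH; rewrite ltNge; apply/negP => Qle.
pose c k := pw k * Q k th.
pose Kp := \sum_(k < m.+1) c k *: Qp p q r k.
have hK x : Kp.[x] = \sum_(k < m.+1) pw k * Q k th * Q k x.
  rewrite /Kp horner_sum; apply: eq_bigr => k _.
  by rewrite hornerZ Qp_horner.
pose G := (th%:P - 'X) * Kp * Kp.
have hG x : G.[x] = (th - x) * Kp.[x] ^+ 2.
  by rewrite /G !hornerE /=; ring.
have LK j : Lp psi (Qp p q r j * Kp) =
    \sum_(k < m.+1) c k * Lp psi (Qp p q r j * Qp p q r k).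
  rewrite /Kp mulr_sumr (Lp_sum hsupp m.+1 (fun k => Qp p q r j * (c k *: Qp p q r k))); apply: eq_bigr => k _.
  by rewrite -scalerAr (LpZ hsupp).
pose a := p m * pw m.
pose H := (a * Q m.+1 th) *: (Qp p q r m * Kp) - (a * Q m th) *: (Qp p q r m.+1 * Kp).
have GH : Lp psi G = Lp psi H.
  apply: Lp_ext => x; rewrite hG /H hornerD hornerN !hornerZ !hornerM !Qp_horner.
  have := CD m x th; rewrite -hK -/a => cd.
  have -> : (th - x) * Kp.[x] ^+ 2 = - ((x - th) * Kp.[x]) * Kp.[x] by ring.
  rewrite cd /Q; ring.
have L1 : Lp psi (Qp p q r m.+1 * Kp) = 0.
  rewrite LK big1 // => k _; rewrite orthL ?mulr0 //.
  by move=> E; have := ltn_ord k; rewrite -E ltnn.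
have L2 : Lp psi (Qp p q r m * Kp) = c m * Lp psi (Qp p q r m * Qp p q r m).
  rewrite LK big_ord_recr /= big1 ?add0r // => k _; rewrite orthL ?mulr0 //.
  by move=> E; have := ltn_ord k; rewrite -E ltnn.
have L3 : 0 <= Lp psi (Qp p q r m * Qp p q r m).
  by apply: Lp_ge0 => x; rewrite hornerM -expr2 sqr_ge0.
have cm : 0 < c m by rewrite /c mulr_gt0 // ?piw_gt0 // IH.
have a0 : 0 < a by rewrite /a mulr_gt0 // piw_gt0.
have LG : Lp psi G <= 0.
  rewrite GH /H (LpB hsupp) !(LpZ hsupp) L1 L2 mulr0 subr0.
  apply: mulr_le0_ge0; first by rewrite pmulr_rle0.
  by rewrite mulr_ge0 // ltW.
have Ks s : msupp psi s -> s != th -> Kp.[s] = 0.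
  move=> ss sth; apply/eqP/negP => Kn.
  have slt : s < th.
    by rewrite lt_neqAle sth /=; apply: le_trans eth; exact: supp_le_eta.
  have G0 : forall x, x <= th -> 0 <= G.[x].
    by move=> x xt; rewrite hG mulr_ge0 ?subr_ge0 ?sqr_ge0.
  have Gs : 0 < G.[s].
    by rewrite hG mulr_gt0 ?subr_gt0 // exprn_even_gt0 //=; apply/negP.
  have := @core R psi hsupp hinf G th eth G0 s ss slt Gs.
  by rewrite ltNge LG.
have Kp0 : Kp = 0.
  have Ainf : infinite_set (msupp psi `\` [set th]).
    exact: infinite_setD hinf (finite_set1 th).
  have [B BA Bsz] := infinite_set_fset (size Kp) Ainf.
  apply: (roots_geq_poly_eq0 (rs := enum_fset B)) => //.
    apply/allP => x xB; have [sx xth] := BA x xB.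
    by rewrite /root Ks //; apply/eqP => E; apply: xth; rewrite E.
  exact: fset_uniq.
have : 0 < Kp.[th].
  rewrite hK big_ord_recl /= /Q Qpoly0 piw0 !mulr1.
  apply: (@lt_le_trans _ _ 1); first exact: ltr01.
  rewrite lerDl.
  apply: sumr_ge0 => k _; rewrite -mulrA; apply: mulr_ge0; first exact: ltW (piw_gt0 _).
  by rewrite -expr2 sqr_ge0.
by rewrite Kp0 horner0 ltxx.
Qed.

Lemma Qpos n {th} : eta <= th -> 0 < Q n th.
Proof.
move=> eth.
have H : forall m k, (k <= m)%N -> 0 < Q k th.
  elim=> [|m IH] k.
    by rewrite leqn0 => /eqP ->; rewrite /Q Qpoly0.
  rewrite leq_eqVlt => /orP[/eqP ->|]; first exact: step eth IH.
  by rewrite ltnS; exact: IH.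
by apply: (H n n); exact: leqnn.
Qed.

Lemma eta_gt0 : 0 < eta.
Proof.
have := @Qpos 1 eta (lexx eta); rewrite /Q Qpoly1 pmulr_lgt0 ?invr_gt0 // subr_gt0.
by move/(le_lt_trans (hr 0%N)).
Qed.

Lemma div_le (a1 a2 b1 b2 : R) : 0 <= a2 -> a2 <= a1 -> 0 < b1 -> b1 <= b2 ->
  a2 / b2 <= a1 / b1.
Proof.
move=> a20 a21 b10 b12; apply: ler_pM => //.
  by rewrite invr_ge0; apply: le_trans b12; exact: ltW.
by rewrite lef_pV2 // posrE; apply: lt_le_trans b12.
Qed.

Definition rho k th := Q k.+1 th / Q k th.

Lemma rho_gt0 k th : eta <= th -> 0 < rho k th.
Proof. by move=> eth; rewrite /rho divr_gt0 // Qpos. Qed.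

Lemma rho_mono k th1 th2 : eta <= th1 -> th1 <= th2 -> rho k th1 <= rho k th2.
Proof.
move=> e1 t12; have e2 := le_trans e1 t12.
elim: k => [|k IH].
  by rewrite /rho /Q !Qpoly1 !Qpoly0 !divr1 ler_pM2r ?invr_gt0 // lerD2r.
have E th : eta <= th ->
    rho k.+1 th = ((th - r k.+1) - q k.+1 / rho k th) / p k.+1.
  move=> eth; rewrite /rho /Q QpolySS.
  have h1 := Qpos k eth; have h2 := Qpos k.+1 eth; rewrite /Q in h1 h2.
  have h3 := hp k.+1.
  by field; rewrite !gt_eqF.
rewrite (E _ e1) (E _ e2) ler_pM2r ?invr_gt0 //.
apply: lerB; first by rewrite lerD2r.
apply: ler_pM => //; first exact: ltW.
  by rewrite invr_ge0 ltW // rho_gt0.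
by rewrite lef_pV2 // posrE rho_gt0.
Qed.

Lemma ratio_mono k d th1 th2 : eta <= th1 -> th1 <= th2 ->
  Q k th2 / Q (k + d) th2 <= Q k th1 / Q (k + d) th1.
Proof.
move=> e1 t12; have e2 := le_trans e1 t12.
elim: d => [|d IH]; first by rewrite addn0 !divff // gt_eqF // Qpos.
have E th : eta <= th -> Q k th / Q (k + d.+1) th = (Q k th / Q (k + d) th) / rho (k + d) th.
  move=> eth; rewrite /rho addnS.
  have h1 := Qpos (k + d) eth; have h2 := Qpos (k + d).+1 eth.
  by field; rewrite !gt_eqF.
rewrite (E _ e1) (E _ e2); apply: div_le => //.
- by rewrite ltW // divr_gt0 // Qpos.
- exact: rho_gt0.
- exact: rho_mono.
Qed.

Lemma term_eq j th : eta <= th ->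
  (p_th p q r th j * pi_th p q r th j)^-1 *
    \sum_(k < j.+1) r_th r th k * pi_th p q r th k
  = (\sum_(k < j.+1) r k * pw k * (Q k th / Q j th) ^+ 2) / (p j * pw j * rho j th).
Proof.
move=> eth.
have th0 : 0 < th := lt_le_trans eta_gt0 eth.
have e1 : \sum_(k < j.+1) r_th r th k * pi_th p q r th k =
    th^-1 * \sum_(k < j.+1) r k * pw k * Q k th ^+ 2.
  rewrite mulr_sumr; apply: eq_bigr => k _; rewrite /r_th /pi_th /pw /Q; ring.
have e2 : \sum_(k < j.+1) r k * pw k * (Q k th / Q j th) ^+ 2 =
    (Q j th)^-1 ^+ 2 * \sum_(k < j.+1) r k * pw k * Q k th ^+ 2.
  rewrite mulr_sumr; apply: eq_bigr => k _; ring.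
rewrite e1 e2 /p_th /pi_th /rho -/pw -/(Q _ _) -/(Q _ _).
have h1 := Qpos j eth; have h2 := Qpos j.+1 eth; have h3 := hp j.
have h4 := piw_gt0 j.
by field; rewrite !gt_eqF.
Qed.

Lemma term_mono j th1 th2 : eta <= th1 -> th1 <= th2 ->
  (\sum_(k < j.+1) r k * pw k * (Q k th2 / Q j th2) ^+ 2) / (p j * pw j * rho j th2)
  <= (\sum_(k < j.+1) r k * pw k * (Q k th1 / Q j th1) ^+ 2) / (p j * pw j * rho j th1).
Proof.
move=> e1 t12; have e2 := le_trans e1 t12.
have rk : forall k th, eta <= th -> 0 <= Q k th / Q j th.
  by move=> k th eth; rewrite ltW // divr_gt0 // Qpos.
apply: div_le.
- apply: sumr_ge0 => k _; rewrite mulr_ge0 ?sqr_ge0 // mulr_ge0 // ltW //.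
  exact: piw_gt0.
- apply: ler_sum => k _; apply: ler_wpM2l.
    by rewrite mulr_ge0 // ltW // piw_gt0.
  have kj : (k <= j)%N by rewrite -ltnS.
  have := @ratio_mono k (j - k) th1 th2 e1 t12; rewrite subnKC // => h.
  by rewrite !expr2; apply: ler_pM => //; exact: rk.
- by rewrite mulr_gt0 ?rho_gt0 // mulr_gt0 // piw_gt0.
- by rewrite ler_pM2l ?rho_mono // mulr_gt0 // piw_gt0.
Qed.

End Pos.

Theorem lemma3 (R : realType) (p q r : nat -> R)
  (hp : forall j, 0 < p j) (hq : forall j, 0 < q j.+1) (hr : forall j, 0 <= r j)
  (hq0 : q 0%N = 0) (hsum : forall j, p j + q j + r j = 1)
  (psi : probability R R)
  (hsupp : psi (~` `[-1, 1]) = 0%E)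
  (hinf : infinite_set (msupp psi))
  (horth : forall m n : nat, m <> n ->
     (\int[psi]_x (Qpoly p q r m x * Qpoly p q r n x)%:E = 0)%E)
  (eta : R) (heta : eta = sup (msupp psi)) :
  forall θ1 θ2 : R, eta <= θ1 -> θ1 <= θ2 ->
  forall n : nat, M_th p q r n θ2 <= M_th p q r n θ1.
Proof.
move=> th1 th2 e1 t12 n; subst eta.
have e2 := le_trans e1 t12.
rewrite /M_th; apply: ler_sum => j _.
rewrite (@term_eq R p q r hp hq hr psi hsupp hinf horth) // (@term_eq R p q r hp hq hr psi hsupp hinf horth) //.
exact: (@term_mono R p q r hp hq hr psi hsupp hinf horth).
Qed.
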